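(* Let $q\neq-1$ and $r$ be real parameters. Let $t$ be a tiling of an $n$-board with $k$ dominoes and $\ell$ black squares. Write $t$ as a word (read from left to right) in the letters $a$ (white square), $b$ (black square) and $D$ (domino). Let $T$ be the tiling whose word is obtained from that of $t$ by keeping every letter $a$ at its place in the word and writing the remaining letters (the $b$'s and $D$'s) in reverse order. Let $A$ be the tiling of the $n$-board obtained from $T$ by replacing every square (white or black) by a colourless square of weight $1$, and let $B$ be the tiling of the $(n-2k)$-board obtained from $T$ by deleting all dominoes. Then $$w_r(t)=q^{k\ell}\,w_r(A)\,w_r(B).$$
   Context: An $m$-board is a $1\times m$ rectangle with cells numbered $1,\dots,m$, tiled by white squares, black squares (each covering one cell) and dominoes (covering two adjacent cells); in $A$ also colourless squares occur. The weight $w_r$: a white square has weight $x$; a black square at cell $i$ has weight $q^i r x$; a domino covering cells $i-1,i$ has weight $q^{i-1}s$; a colourless square has weight $1$. The weight of a tiling is the product of the weights of its tiles. *)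

(* Defs.v *)
From mathcomp Require Import all_boot all_order all_algebra.
Set Implicit Arguments. Unset Strict Implicit. Unset Printing Implicit Defensive.
Import GRing.Theory Num.Theory.
Local Open Scope ring_scope.

Inductive tile := White | Black | Domino | Colourless.

Definition tile_len (c : tile) : nat := if c is Domino then 2%N else 1%N.

Definition board_len (t : seq tile) : nat := sumn (map tile_len t).

Definition is_white (c : tile) : bool := if c is White then true else false.
Definition is_black (c : tile) : bool := if c is Black then true else false.
Definition is_domino (c : tile) : bool := if c is Domino then true else false.
Definition is_colourless (c : tile) : bool := if c is Colourless then true else false.

(* weight of a tiling word whose first tile starts at cell p+1:
   white square: x; black square at cell i: q^i r x;
   domino covering cells i-1, i: q^(i-1) s; colourless square: 1. *)
Fixpoint wt_from (R : ringType) (q r s x : R) (p : nat) (t : seq tile) : R :=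
  match t with
  | [::] => 1
  | White :: t' => x * wt_from q r s x p.+1 t'
  | Black :: t' => q ^+ p.+1 * r * x * wt_from q r s x p.+1 t'
  | Domino :: t' => q ^+ p.+1 * s * wt_from q r s x p.+2 t'
  | Colourless :: t' => wt_from q r s x p.+1 t'
  end.

Definition w_r (R : ringType) (q r s x : R) (t : seq tile) : R := wt_from q r s x 0 t.

Fixpoint fill_nonwhite (t stack : seq tile) : seq tile :=
  match t with
  | [::] => [::]
  | White :: t' => White :: fill_nonwhite t' stack
  | c :: t' => head c stack :: fill_nonwhite t' (behead stack)
  end.

Definition transformT (t : seq tile) : seq tile :=
  fill_nonwhite t (rev (filter (fun c => ~~ is_white c) t)).

Definition decolour (c : tile) : tile := if c is Domino then Domino else Colourless.
Definition tilingA (t : seq tile) : seq tile := map decolour (transformT t).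

Definition tilingB (t : seq tile) : seq tile :=
  filter (fun c => ~~ is_domino c) (transformT t).

(* Main.v *)
Require Import Defs.
From mathcomp Require Import all_boot all_order all_algebra.
From mathcomp Require Import ring zify.
Import GRing.Theory Num.Theory.
Local Open Scope ring_scope.

Fixpoint ex (p : nat) (t : seq tile) : nat :=
  match t with
  | [::] => 0
  | White :: t' => ex p.+1 t'
  | Black :: t' => p.+1 + ex p.+1 t'
  | Domino :: t' => p.+1 + ex p.+2 t'
  | Colourless :: t' => ex p.+1 t'
  end%N.

Fixpoint Wf (p : nat) (t : seq tile) : nat :=
  match t with
  | [::] => 0
  | White :: t' => Wf p.+1 t'
  | _ :: t' => p.+1 + Wf p t'
  end%N.

Fixpoint Pf (c : seq tile) : nat :=
  match c with
  | [::] => 0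
  | d :: c' => tile_len d * size c' + Pf c'
  end%N.

Fixpoint Qf (c : seq tile) : nat :=
  match c with
  | [::] => 0
  | d :: c' => tile_len d * count is_domino c' + is_black d * count is_black c' + Qf c'
  end%N.

Definition bd (c : tile) : bool := is_black c || is_domino c.

Lemma shift_ex (p d : nat) (t : seq tile) :
  ex (d + p) t = (ex p t + d * (count is_black t + count is_domino t))%N.
Proof.
elim: t p => [|c t IH] p /=; first by lia.
case: c => /=.
- by rewrite -addnS IH; lia.
- by rewrite -addnS IH; lia.
- by rewrite -!addnS IH; lia.
- by rewrite -addnS IH; lia.
Qed.

Lemma bd_size (t : seq tile) : all (fun c => ~~ is_colourless c) t ->
  (count is_black t + count is_domino t)%N = size (filter (fun c => ~~ is_white c) t).
Proof.
elim: t => [|c t IH] //= /andP [Hc H]; case: c Hc => //= _; rewrite -IH //; lia.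
Qed.

Lemma L1 (t : seq tile) (p : nat) : all (fun c => ~~ is_colourless c) t ->
  ex p t = (Wf p t + Pf (filter (fun c => ~~ is_white c) t))%N.
Proof.
elim: t p => [|c t IH] p //= /andP [Hc H]; case: c Hc => //= _.
- by rewrite IH.
- rewrite (shift_ex p 1) IH // bd_size //; lia.
- rewrite (shift_ex p 2) IH // bd_size //; lia.
Qed.

Lemma count_fill (P : tile -> bool) (t st : seq tile) :
  P White = false -> size st = count (fun c => ~~ is_white c) t ->
  count P (fill_nonwhite t st) = count P st.
Proof.
move=> PW; elim: t st => [|c t IH] st /=.
  by case: st.
case: c => /=; rewrite ?PW ?add0n; try by move=> /IH.
all: case: st => [|d st] //= [] /IH ->; done.
Qed.

Lemma count_black_dec u : count is_black (map decolour u) = 0%N.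
Proof. by elim: u => [|c u IH] //=; case: c. Qed.
Lemma count_dom_dec u : count is_domino (map decolour u) = count is_domino u.
Proof. by elim: u => [|c u IH] //=; case: c => /=; rewrite IH. Qed.
Lemma count_dom_filt u : count is_domino (filter (fun c => ~~ is_domino c) u) = 0%N.
Proof. by elim: u => [|c u IH] //=; case: c. Qed.
Lemma count_black_filt u :
  count is_black (filter (fun c => ~~ is_domino c) u) = count is_black u.
Proof. by elim: u => [|c u IH] //=; case: c => /=; rewrite IH. Qed.

Lemma L2 (t st : seq tile) (p : nat) :
  size st = count (fun c => ~~ is_white c) t -> all bd st ->
  (ex p (map decolour (fill_nonwhite t st)) +
   ex p (filter (fun c => ~~ is_domino c) (fill_nonwhite t st)))%N
  = (Wf p t + Qf st)%N.
Proof.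
elim: t st p => [|c t IH] st p /=.
  by case: st.
case: c => /=; first by move=> Hs Ha; rewrite IH.
all: case: st => [|d st] //= [] Hs /andP [Hd Ha].
all: case: d Hd => //= _.
all: first [ rewrite (shift_ex p 1) | rewrite (shift_ex p 2) ].
all: rewrite ?count_black_dec ?count_dom_dec ?(count_fill is_domino) //.
all: first [ rewrite (shift_ex p 1) | idtac ].
all: rewrite ?count_dom_filt ?count_black_filt ?(count_fill is_black) //.
all: have := IH st p Hs Ha; lia.
Qed.

Lemma Pf_rcons c z : Pf (rcons c z) = (Pf c + board_len c)%N.
Proof.
rewrite /board_len; elim: c => [|d c IH] /=; first by lia.
rewrite IH size_rcons; lia.
Qed.

Lemma board_bd c : all bd c ->
  board_len c = (count is_black c + 2 * count is_domino c)%N.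
Proof.
rewrite /board_len; elim: c => [|d c IH] //= /andP [Hd Ha].
rewrite IH //; case: d Hd => //= _; lia.
Qed.

Lemma board_len_rev c : board_len (rev c) = board_len c.
Proof. by rewrite /board_len map_rev sumn_rev. Qed.

Lemma L3 c : all bd c ->
  Pf (rev c) = (count is_domino c * count is_black c + Qf c)%N.
Proof.
elim: c => [|d c IH] //= /andP [Hd Ha].
rewrite rev_cons Pf_rcons board_len_rev IH // board_bd //.
case: d Hd => //= _; lia.
Qed.

Lemma wt_ex (R : realFieldType) (q r s x : R) (p : nat) (t : seq tile) :
  wt_from q r s x p t = x ^+ (count is_white t + count is_black t) *
    r ^+ (count is_black t) * s ^+ (count is_domino t) * q ^+ (ex p t).
Proof.
elim: t p => [|c t IH] p /=; first by rewrite !expr0 !mulr1.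
case: c => /=; rewrite IH ?add0n ?addn0 ?exprD ?expr1 ?exprS; ring.
Qed.

Lemma count_white_fill t st : all bd st ->
  count is_white (fill_nonwhite t st) = count is_white t.
Proof.
elim: t st => [|c t IH] st //= Ha.
case: c => /=; first by rewrite IH.
all: case: st Ha => [|d st] /=; [by rewrite IH | move=> /andP [Hd Ha];
  rewrite IH //; case: d Hd => //].
Qed.

Lemma board_fill t st : size st = count (fun c => ~~ is_white c) t ->
  board_len (fill_nonwhite t st) = (count is_white t + board_len st)%N.
Proof.
rewrite /board_len; elim: t st => [|c t IH] st /=; first by case: st.
case: c => /=; first by move=> /IH ->; lia.
all: case: st => [|d st] //= [] /IH ->; lia.
Qed.

Lemma board_split t : board_len t =
  (count is_white t + board_len (filter (fun c => ~~ is_white c) t))%N.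
Proof.
rewrite /board_len; elim: t => [|c t IH] //=; case: c => /=; rewrite IH; lia.
Qed.

Lemma board_dom u : board_len u =
  (board_len (filter (fun c => ~~ is_domino c) u) + 2 * count is_domino u)%N.
Proof.
rewrite /board_len; elim: u => [|c u IH] //=; case: c => /=; rewrite IH; lia.
Qed.

Lemma board_dec u : board_len (map decolour u) = board_len u.
Proof.
rewrite /board_len; elim: u => [|c u IH] //=; case: c => /=; rewrite IH //.
Qed.

Lemma count_nw (P : tile -> bool) t : P White = false ->
  count P (filter (fun c => ~~ is_white c) t) = count P t.
Proof.
move=> PW; elim: t => [|c t IH] //=; case: c => /=; rewrite ?PW IH //.
Qed.

Lemma all_bd_nw t : all (fun c => ~~ is_colourless c) t ->
  all bd (filter (fun c => ~~ is_white c) t).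
Proof.
elim: t => [|c t IH] //= /andP [Hc H].
case: c Hc => //= _; rewrite /bd /= ?IH //.
Qed.

Theorem proposition2p4 (R : realFieldType) (q r s x : R) (n k l : nat)
  (t : seq tile) :
  q != -1 ->
  all (fun c => ~~ is_colourless c) t ->
  board_len t = n ->
  count is_domino t = k ->
  count is_black t = l ->
  board_len (tilingA t) = n /\ board_len (tilingB t) = (n - 2 * k)%N /\
  w_r q r s x t = q ^+ (k * l) * w_r q r s x (tilingA t) * w_r q r s x (tilingB t).
Proof.
move=> _ Hc Hn Hk Hl.
set st := rev (filter (fun c => ~~ is_white c) t).
have Hsz : size st = count (fun c => ~~ is_white c) t by rewrite size_rev size_filter.
have Hbd : all bd st by rewrite all_rev all_bd_nw.
have HT : board_len (transformT t) = n.
  by rewrite /transformT board_fill // board_len_rev -board_split.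
have HkT : count is_domino (transformT t) = k.
  by rewrite /transformT (count_fill is_domino) // count_rev count_nw.
have HlT : count is_black (transformT t) = l.
  by rewrite /transformT (count_fill is_black) // count_rev count_nw.
split; first by rewrite /tilingA board_dec.
split; first by rewrite -HT (board_dom (transformT t)) /tilingB HkT addnK.
rewrite /w_r !wt_ex /tilingA /tilingB count_black_dec count_dom_dec count_dom_filt
  count_black_filt HkT HlT Hk Hl.
have Hw : count is_white (map decolour (transformT t)) = 0%N.
  by elim: (transformT t) => [|c u IH] //=; case: c.
have Hw2 : count is_white (filter (fun c => ~~ is_domino c) (transformT t)) =
  count is_white t.
  rewrite -(count_white_fill t st Hbd) /transformT -/st.
  by elim: (fill_nonwhite t st) => [|c u IH] //=; case: c => /=; rewrite IH.
have He : ex 0 t = (k * l + ex 0 (map decolour (transformT t)) +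
    ex 0 (filter (fun c => ~~ is_domino c) (transformT t)))%N.
  rewrite /transformT -/st -addnA L2 // L1 // -(revK (filter _ t)) -/st L3 //.
  rewrite !count_rev !count_nw // Hk Hl; lia.
rewrite Hw Hw2 He !exprD; ring.
Qed.
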